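(* Let $n\ge 4$ be an even integer and $k\ge 3$ an integer. Then $\psi(C_n\square P_k)=4$.
   Context: All graphs are finite and connected; $d(u,v)$ is the shortest-path distance. $C_n$ is the cycle on $n$ vertices and $P_k$ the path on $k$ vertices. The cartesian product $G\square H$ has vertex set $V(G)\times V(H)$, with $(g_1,h_1)$ adjacent to $(g_2,h_2)$ iff either $h_1=h_2$ and $g_1g_2\in E(G)$, or $g_1=g_2$ and $h_1h_2\in E(H)$. For an ordered set $Q=\{q_1,\dots,q_l\}$ of vertices, $r(x|Q)=(d(x,q_1),\dots,d(x,q_l))$. $Q$ is a doubly resolving set of $G$ if for any two distinct vertices $x,y$ of $G$, $r(x|Q)-r(y|Q)\neq\lambda(1,\dots,1)$ for every integer $\lambda$. $\psi(G)$ denotes the minimum size of a doubly resolving set of $G$. *)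

(* Defs.v *)
From mathcomp Require Import all_boot all_order all_algebra.
Set Implicit Arguments. Unset Strict Implicit. Unset Printing Implicit Defensive.

Definition walk_len (T : finType) (e : rel T) (x y : T) (m : nat) : bool :=
  [exists p : m.-tuple T, path e x p && (last x p == y)].

(* shortest-path distance: least m such that a walk of length m from x to y
   exists (in a connected graph such an m is < #|T|). *)
Definition dist (T : finType) (e : rel T) (x y : T) : nat :=
  find (walk_len e x y) (iota 0 #|T|).

Definition cycle_rel (n : nat) : rel 'I_n :=
  fun i j => (j == (i.+1 %% n) :> nat) || (i == (j.+1 %% n) :> nat).

Definition path_rel (k : nat) : rel 'I_k :=
  fun i j => (j == i.+1 :> nat) || (i == j.+1 :> nat).

Definition boxprod (T1 T2 : finType) (e1 : rel T1) (e2 : rel T2) : rel (T1 * T2) :=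
  fun a b => ((a.2 == b.2) && e1 a.1 b.1) || ((a.1 == b.1) && e2 a.2 b.2).

Definition doubly_resolving (T : finType) (e : rel T) (Q : {set T}) : Prop :=
  forall x y : T, x != y ->
    ~ exists lam : int, forall q, q \in Q ->
        ((dist e x q)%:Z - (dist e y q)%:Z)%R = lam.

Definition psi_eq (T : finType) (e : rel T) (m : nat) : Prop :=
  (exists Q : {set T}, doubly_resolving e Q /\ #|Q| = m) /\
  (forall Q : {set T}, doubly_resolving e Q -> m <= #|Q|).

(* Main.v *)
Require Import Defs.
From mathcomp Require Import all_boot all_order all_algebra zify.
Set Implicit Arguments. Unset Strict Implicit. Unset Printing Implicit Defensive.
Definition ad (a b : nat) := (a - b) + (b - a).
Definition cd (n a b : nat) := minn (ad a b) (n - ad a b).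
Definition E n (u j v j' a b a' b' : nat) :=
  cd n u a + ad j b + (cd n v a' + ad j' b') = cd n v a + ad j' b + (cd n u a' + ad j b').
Ltac simp_cd := repeat match goal with |- context [cd ?n ?x ?y] =>
   first [ rewrite (_ : cd n x y = x - y); last by rewrite /cd /ad; lia
         | rewrite (_ : cd n x y = y - x); last by rewrite /cd /ad; lia
         | rewrite (_ : cd n x y = n - (x - y)); last by rewrite /cd /ad; lia
         | rewrite (_ : cd n x y = n - (y - x)); last by rewrite /cd /ad; lia ] end;
  repeat match goal with |- context [ad ?x ?y] =>
   first [ rewrite (_ : ad x y = x - y); last by rewrite /ad; lia
         | rewrite (_ : ad x y = y - x); last by rewrite /ad; lia ] end.
Ltac W u v j j' := exists u, v, j, j'; split; [lia | rewrite /E; split; simp_cd; lia].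
Lemma L0 n m k a2 a3 b3 : n = m + m -> 2 <= m -> 3 <= k -> a2 < n -> a3 < n -> b3 < k ->
  exists u v j j', (u < n /\ v < n /\ j < k /\ j' < k /\ (u <> v \/ j <> j')) /\
  E n u j v j' 0 0 a2 (k-1) /\ E n u j v j' 0 0 a3 b3.
Proof.
move=> Hn Hm Hk Ha2 Ha3 Hb3.
have [Htop|Htop] := boolP (b3 == k-1).
  have {Htop} -> : b3 = k - 1 by lia.
  have [Hle|Hle] := boolP (a2 <= a3).
    have [H1|H1] := boolP (a3 - a2 < m).
      have [H2|H2] := boolP (a2 == 0). W 0 (n-1) 0 0.
      have [H3|H3] := boolP (a2 <= m). W a2 (a2-1) 0 1.
      W (a3-m+1) (a3-m) 0 1.
    have [H1'|H1'] := boolP (a3 - a2 == m).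
      have [H2|H2] := boolP (a2 == 0). W 1 (n-1) 0 0.
      W (a2+1) (a2-1) 0 1.
    W a3 (a3-1) 0 0.
  have [H1|H1] := boolP (a2 - a3 < m).
    have [H2|H2] := boolP (a3 == 0). W 0 (n-1) 0 0.
    have [H3|H3] := boolP (a3 <= m). W a3 (a3-1) 0 1.
    W (a2-m+1) (a2-m) 0 1.
  have [H1'|H1'] := boolP (a2 - a3 == m).
    have [H2|H2] := boolP (a3 == 0). W 1 (n-1) 0 0.
    W (a3+1) (a3-1) 0 1.
  W a2 (a2-1) 0 0.
have [Hbot|Hbot] := boolP (b3 == 0).
  have {Hbot} -> : b3 = 0 by lia.
  have [H1|H1] := boolP (a3 == m).
    have [H2|H2] := boolP (0 < a2 < m). W 1 (n-1) 0 1.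
    have [H3|H3] := boolP (a2 == 0). W 1 (n-1) 0 0.
    have [H4|H4] := boolP (a2 == m). W 1 (n-1) 0 0.
    W 1 (n-1) 1 0.
  have [H2|H2] := boolP (a3 < m).
    have [H3|H3] := boolP (a2 <= a3). W 0 (n-1) 0 0.
    have [H4|H4] := boolP (m <= a2). W 0 (n-1) 1 0.
    W (a3+m+1) (a3+m) 1 0.
  have [H3|H3] := boolP (a2 == 0). W (m+1) m 0 0.
  have [H4|H4] := boolP (a3 <= a2). W (m+1) m 0 0.
  have [H5|H5] := boolP (a2 <= m). W (m+1) m 1 0.
  W a3 (a3-1) 1 0.
have [H1|H1] := boolP (m <= a2).
  have [H2|H2] := boolP (a3 < m). W 0 (n-1) (k-1) (k-2).
  W 0 (n-1) 1 0.
have [H2|H2] := boolP (1 <= a2).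
  have [H3|H3] := boolP (a3 == 0). W (m+1) m (k-1) (k-2).
  have [H4|H4] := boolP (m+1 <= a3). W (m+1) m (k-1) (k-2).
  W (m+1) m 1 0.
have [H3|H3] := boolP (a3 < m). W 0 (n-1) 0 0.
have [H4|H4] := boolP (m < a3). W (m+1) m 0 0.
W 1 (n-1) 0 0.
Qed.

Definition DD n k (x y : 'I_n * 'I_k) := cd n x.1 y.1 + ad x.2 y.2.

Lemma mod_succ n i : i < n -> i.+1 %% n = (if i.+1 == n then 0 else i.+1).
Proof. move=> h; case: eqP => [->|h2]; first by rewrite modnn. by rewrite modn_small //; lia. Qed.

Lemma edge_lip n k (x y z : 'I_n * 'I_k) :
  boxprod (@cycle_rel n) (@path_rel k) x y -> DD x z <= DD y z + 1.
Proof.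
case: x y z => [i j] [i' j'] [a b]; rewrite /boxprod /DD /=.
move: (ltn_ord i) (ltn_ord i') (ltn_ord a) (ltn_ord j) (ltn_ord j') (ltn_ord b) => hi hi' ha hj hj' hb.
case/orP => /andP [/eqP E1 H].
  subst j'; rewrite /cycle_rel in H; case/orP: H => /eqP H.
    move: H; rewrite mod_succ //; case: eqP => h1 h2; rewrite /cd /ad; lia.
  move: H; rewrite mod_succ //; case: eqP => h1 h2; rewrite /cd /ad; lia.
subst i'; rewrite /path_rel in H; case/orP: H => /eqP H; rewrite /cd /ad; lia.
Qed.

Lemma DD_refl n k (x : 'I_n * 'I_k) : DD x x = 0.
Proof. by rewrite /DD /cd /ad !subnn minnC /minn. Qed.

Lemma walk_lower n k (x : 'I_n * 'I_k) (p : seq ('I_n * 'I_k)) :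
  path (boxprod (@cycle_rel n) (@path_rel k)) x p -> DD x (last x p) <= size p.
Proof.
elim: p x => [|y p IH] x /=; first by rewrite DD_refl.
move=> /andP [hxy hp]; have := edge_lip (last y p) hxy; have := IH y hp; lia.
Qed.

Lemma step n k (x z : 'I_n * 'I_k) : 0 < DD x z ->
  exists y, boxprod (@cycle_rel n) (@path_rel k) x y /\ DD y z = (DD x z).-1.
Proof.
case: x z => [i j] [a b]; rewrite /DD /=.
move: (ltn_ord i) (ltn_ord a) (ltn_ord j) (ltn_ord b) => hi ha hj hb hpos.
have [hjb|hjb] := ltnP j b.
  have h : j.+1 < k by lia.
  exists (i, Ordinal h); rewrite /boxprod /path_rel /= eqxx /=; split; first by rewrite eqxx orbT.
  rewrite /cd /ad /=; lia.
have [hjb'|hjb'] := ltnP b j.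
  have h : j.-1 < k by lia.
  exists (i, Ordinal h); rewrite /boxprod /path_rel /= eqxx /=; split.
    apply/orP; right; apply/orP; right; apply/eqP; lia.
  rewrite /cd /ad /=; lia.
have ejb : nat_of_ord j = b by lia.
have key : forall i' : 'I_n, cycle_rel i i' -> cd n i' a + 1 = cd n i a ->
    exists y : 'I_n * 'I_k, boxprod (@cycle_rel n) (@path_rel k) (i, j) y /\ cd n y.1 a + ad y.2 b = (cd n i a + ad j b).-1.
  move=> i' hc he; exists (i', j); rewrite /boxprod /= eqxx hc; split => //.
  rewrite ejb /ad subnn in he *; lia.
have hcd : 0 < cd n i a by move: hpos; rewrite ejb /ad subnn; lia.
have [i0|ipos] := posnP i; have [ie|ie] := eqVneq i.+1 n.
- move: hcd; rewrite /cd /ad; lia.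
- have h1 : i.+1 < n by lia.
  have h2 : n.-1 < n by lia.
  have [H|H] : cd n i.+1 a + 1 = cd n i a \/ cd n n.-1 a + 1 = cd n i a.
    move: hcd; rewrite /cd /ad; lia.
  + apply: (key (Ordinal h1)) => //; rewrite /cycle_rel /= modn_small ?eqxx //.
  + apply: (key (Ordinal h2)) => //; rewrite /cycle_rel /= prednK ?modnn; last lia.
    by rewrite i0 ?eqxx ?orbT.
- have h1 : 0 < n by lia.
  have h2 : i.-1 < n by lia.
  have [H|H] : cd n 0 a + 1 = cd n i a \/ cd n i.-1 a + 1 = cd n i a.
    move: hcd; rewrite /cd /ad; lia.
  + apply: (key (Ordinal h1)) => //; rewrite /cycle_rel /= ie modnn eqxx //.
  + apply: (key (Ordinal h2)) => //; rewrite /cycle_rel /= prednK // (@modn_small i) //.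
    by rewrite ?eqxx ?orbT.
- have h1 : i.+1 < n by lia.
  have h2 : i.-1 < n by lia.
  have [H|H] : cd n i.+1 a + 1 = cd n i a \/ cd n i.-1 a + 1 = cd n i a.
    move: hcd; rewrite /cd /ad; lia.
  + apply: (key (Ordinal h1)) => //; rewrite /cycle_rel /= modn_small ?eqxx //.
  + apply: (key (Ordinal h2)) => //; rewrite /cycle_rel /= prednK // (@modn_small i) //.
    by rewrite ?eqxx ?orbT.
Qed.

Lemma DD0 n k (x z : 'I_n * 'I_k) : DD x z = 0 -> x = z.
Proof.
case: x z => [i j] [a b]; rewrite /DD /cd /ad /= => h.
move: (ltn_ord i) (ltn_ord a) => hi ha.
have e1 : nat_of_ord i = a by lia.
have e2 : nat_of_ord j = b by lia.
by congr pair; apply: val_inj.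
Qed.

Lemma walk_exists n k d (x z : 'I_n * 'I_k) : DD x z = d ->
  walk_len (boxprod (@cycle_rel n) (@path_rel k)) x z d.
Proof.
elim: d x => [|d IH] x hd.
  rewrite (DD0 hd); apply/existsP; exists [tuple]; by rewrite /= eqxx.
have hpos : 0 < DD x z by rewrite hd.
have [y [hxy hy]] := step hpos.
rewrite hd /= in hy.
case/existsP: (IH y hy) => p /andP [hp hl].
apply/existsP; exists (cons_tuple y p) => /=.
by rewrite hxy hp.
Qed.

Lemma DD_lt n k (x z : 'I_n * 'I_k) : DD x z < n * k.
Proof.
case: x z => [i j] [a b]; rewrite /DD /cd /ad /=.
move: (ltn_ord i) (ltn_ord a) (ltn_ord j) (ltn_ord b) => hi ha hj hb.
have h1 : minn (i - a + (a - i)) (n - (i - a + (a - i))) <= n.-1 by lia.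
have h2 : j - b + (b - j) <= k.-1 by lia.
nia.
Qed.

Lemma distE n k (x z : 'I_n * 'I_k) :
  dist (boxprod (@cycle_rel n) (@path_rel k)) x z = DD x z.
Proof.
rewrite /dist.
have hlt : DD x z < #|{: 'I_n * 'I_k}|.
  by rewrite card_prod !card_ord; apply: DD_lt.
set N := #|_| in hlt *.
rewrite -(subnKC (ltnW hlt)) iotaD find_cat.
have -> : has (walk_len (boxprod (@cycle_rel n) (@path_rel k)) x z) (iota 0 (DD x z)) = false.
  apply/negbTE/hasPn => m; rewrite mem_iota => /andP [_ hm].
  apply/negP => /existsP [p /andP [hp /eqP hl]].
  have := walk_lower hp; rewrite hl size_tuple; lia.
rewrite size_iota.
have -> : N - DD x z = (N - DD x z).-1.+1 by lia.
by rewrite /= add0n (walk_exists (erefl _)) addn0.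
Qed.

Lemma modn2 x n : x < n + n -> x %% n = if x < n then x else x - n.
Proof.
move=> h; case: (ltnP x n) => h1; first by rewrite modn_small.
rewrite -{1}(subnK h1) modnDr modn_small //; lia.
Qed.

Lemma cd_rot n u a r : u < n -> a < n -> r < n ->
  cd n ((u + r) %% n) ((a + r) %% n) = cd n u a.
Proof.
move=> hu ha hr; rewrite !modn2; try lia.
case: (ltnP (u + r) n) => h1; case: (ltnP (a + r) n) => h2; rewrite /cd /ad; lia.
Qed.

Lemma rot_back n r a : r < n -> a < n -> ((a + n - r) %% n + r) %% n = a.
Proof.
move=> hr ha; rewrite (@modn2 (a + n - r)); last lia.
case: (ltnP (a + n - r) n) => h1; rewrite modn2; try lia;
  case: ltnP => h2; lia.
Qed.

Lemma rot_inj n r u v : r < n -> u < n -> v < n -> (u + r) %% n = (v + r) %% n -> u = v.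
Proof.
move=> hr hu hv; rewrite !modn2; try lia.
case: (ltnP (u + r) n) => h1; case: (ltnP (v + r) n) => h2; lia.
Qed.

Lemma zeq (a b c d : nat) : ((a%:Z - b%:Z) = (c%:Z - d%:Z))%R -> a + d = c + b.
Proof. lia. Qed.

Lemma zeq' (a b c d : nat) : a + d = c + b -> ((a%:Z - b%:Z) = (c%:Z - d%:Z))%R.
Proof. lia. Qed.

Lemma up_arith n m k i j i' j' : n = m + m -> 2 <= m -> 3 <= k -> i < n -> i' < n -> j < k -> j' < k ->
 cd n i 0 + ad j 0 + (cd n i' m + ad j' 0) = cd n i' 0 + ad j' 0 + (cd n i m + ad j 0) ->
 cd n i 0 + ad j 0 + (cd n i' 0 + ad j' (k-1)) = cd n i' 0 + ad j' 0 + (cd n i 0 + ad j (k-1)) ->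
 cd n i 0 + ad j 0 + (cd n i' 1 + ad j' 0) = cd n i' 0 + ad j' 0 + (cd n i 1 + ad j 0) ->
 i = i' /\ j = j'.
Proof.
move=> hn hm hk hi hi' hj hj' H1 H2 H3.
have ej : j = j' by move: H2; rewrite /ad; lia.
subst j'; split => //.
have s1 : cd n i 0 + cd n i m = m by rewrite /cd /ad; lia.
have s2 : cd n i' 0 + cd n i' m = m by rewrite /cd /ad; lia.
have c0 : cd n i 0 = cd n i' 0 by lia.
have c1 : cd n i 1 = cd n i' 1 by lia.
move: c0 c1; rewrite /cd /ad; lia.
Qed.

Lemma half_even n : ~~ odd n -> n = n./2 + n./2.
Proof. move=> h; move: (odd_double_half n); rewrite (negbTE h) add0n -addnn; lia. Qed.

Lemma upper n k : 4 <= n -> ~~ odd n -> 3 <= k ->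
  exists Q : {set 'I_n * 'I_k},
    doubly_resolving (boxprod (@cycle_rel n) (@path_rel k)) Q /\ #|Q| = 4.
Proof.
move=> hn hodd hk.
set m := n./2.
have hnm : n = m + m by apply: half_even.
have h0 : 0 < n by lia.
have hm : m < n by lia.
have h1 : 1 < n by lia.
have l0 : 0 < k by lia.
have lk : k - 1 < k by lia.
pose o0 := Ordinal h0; pose om := Ordinal hm; pose o1 := Ordinal h1.
pose z0 := Ordinal l0; pose zk := Ordinal lk.
exists [set (o0, z0); (om, z0); (o0, zk); (o1, z0)]; split.
  move=> [i j] [i' j'] hxy [lam H].
  have E1 := H (o0, z0) ltac:(by rewrite !inE eqxx).
  have E2 := H (om, z0) ltac:(by rewrite !inE eqxx ?orbT).
  have E3 := H (o0, zk) ltac:(by rewrite !inE eqxx ?orbT).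
  have E4 := H (o1, z0) ltac:(by rewrite !inE eqxx ?orbT).
  rewrite !distE /DD /= in E1 E2 E3 E4.
  have F2 : cd n i 0 + ad j 0 + (cd n i' m + ad j' 0) = cd n i' 0 + ad j' 0 + (cd n i m + ad j 0) by lia.
  have F3 : cd n i 0 + ad j 0 + (cd n i' 0 + ad j' (k-1)) = cd n i' 0 + ad j' 0 + (cd n i 0 + ad j (k-1)) by lia.
  have F4 : cd n i 0 + ad j 0 + (cd n i' 1 + ad j' 0) = cd n i' 0 + ad j' 0 + (cd n i 1 + ad j 0) by lia.
  have hm2 : 2 <= m by lia.
  have [ei ej] := up_arith hnm hm2 hk (ltn_ord i) (ltn_ord i') (ltn_ord j) (ltn_ord j') F2 F3 F4.
  move/negP: hxy; apply; rewrite xpair_eqE; apply/andP; split; apply/eqP; exact: val_inj.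
rewrite (_ : [set (o0, z0); (om, z0); (o0, zk); (o1, z0)] =
   (o0, z0) |: ((om, z0) |: ((o0, zk) |: [set (o1, z0)]))); last first.
  by apply/setP => q; rewrite !inE !orbA.
rewrite !cardsU1 cards1 !inE !xpair_eqE -!val_eqE /=.
have -> : (0 == m) = false by apply/eqP; lia.
have -> : (m == 0) = false by apply/eqP; lia.
have -> : (m == 1) = false by apply/eqP; lia.
have -> : (0 == k - 1) = false by apply/eqP; lia.
by rewrite /= ?andbF ?andbT.
Qed.

Definition goodP n k (x y : 'I_n * 'I_k) (P : 'I_n * 'I_k -> Prop) :=
  forall q q', P q -> P q' -> DD x q + DD y q' = DD y q + DD x q'.

Lemma NL n m k (p1 p2 p3 : 'I_n * 'I_k) : n = m + m -> 2 <= m -> 3 <= k ->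
  nat_of_ord p1.2 = 0 -> nat_of_ord p2.2 = k - 1 ->
  exists x y, x != y /\ goodP x y (fun q => q = p1 \/ q = p2 \/ q = p3).
Proof.
case: p1 p2 p3 => [a1 b1] [a2 b2] [a3 b3] hn hm hk /= hb1 hb2.
move: (ltn_ord a1) (ltn_ord a2) (ltn_ord a3) (ltn_ord b3) => ha1 ha2 ha3 hb3.
set r := nat_of_ord a1.
have ha2' : (a2 + n - r) %% n < n by apply: ltn_pmod; lia.
have ha3' : (a3 + n - r) %% n < n by apply: ltn_pmod; lia.
have [u [v [j [j' [[hu [hv [hj [hj' hne]]]] [E2 E3]]]]]] := L0 hn hm hk ha2' ha3' hb3.
have hu' : (u + r) %% n < n by apply: ltn_pmod; lia.
have hv' : (v + r) %% n < n by apply: ltn_pmod; lia.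
exists (Ordinal hu', Ordinal hj), (Ordinal hv', Ordinal hj'); split.
  apply/eqP => e.
  have e1 := congr1 (fun p => nat_of_ord p.1) e.
  have e2 := congr1 (fun p => nat_of_ord p.2) e.
  simpl in e1, e2.
  have := rot_inj (ltn_ord a1) hu hv e1; clear -hne e2; lia.
have cr : forall w (a : 'I_n) a', w < n -> a' < n -> nat_of_ord a = (a' + r) %% n ->
    cd n ((w + r) %% n) a = cd n w a'.
  by move=> w a a' hw ha' ->; rewrite cd_rot.
have hn0 : 0 < n by lia.
have r1 : nat_of_ord a1 = (0 + r) %% n by rewrite add0n modn_small.
have r2 : nat_of_ord a2 = ((a2 + n - r) %% n + r) %% n by rewrite rot_back.
have r3 : nat_of_ord a3 = ((a3 + n - r) %% n + r) %% n by rewrite rot_back.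
have X1 : DD (Ordinal hu', Ordinal hj) (a1, b1) = cd n u 0 + ad j 0.
  rewrite /DD /= (cr u a1 0 hu hn0 r1); rewrite /ad; clear -hb1; lia.
have Y1 : DD (Ordinal hv', Ordinal hj') (a1, b1) = cd n v 0 + ad j' 0.
  rewrite /DD /= (cr v a1 0 hv hn0 r1); rewrite /ad; clear -hb1; lia.
have X2 : DD (Ordinal hu', Ordinal hj) (a2, b2) = cd n u ((a2 + n - r) %% n) + ad j (k-1).
  rewrite /DD /= (cr u a2 _ hu ha2' r2); rewrite /ad; clear -hb2; lia.
have Y2 : DD (Ordinal hv', Ordinal hj') (a2, b2) = cd n v ((a2 + n - r) %% n) + ad j' (k-1).
  rewrite /DD /= (cr v a2 _ hv ha2' r2); rewrite /ad; clear -hb2; lia.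
have X3 : DD (Ordinal hu', Ordinal hj) (a3, b3) = cd n u ((a3 + n - r) %% n) + ad j b3.
  by rewrite /DD /= (cr u a3 _ hu ha3' r3).
have Y3 : DD (Ordinal hv', Ordinal hj') (a3, b3) = cd n v ((a3 + n - r) %% n) + ad j' b3.
  by rewrite /DD /= (cr v a3 _ hv ha3' r3).
rewrite /E in E2 E3.
move: X1 Y1 X2 Y2 X3 Y3 E2 E3.
set A2 := (a2 + n - r) %% n; set A3 := (a3 + n - r) %% n.
set x := (Ordinal hu', Ordinal hj); set y := (Ordinal hv', Ordinal hj').
move: (cd n u 0) (cd n v 0) (cd n u A2) (cd n v A2) (cd n u A3) (cd n v A3) => c1 c2 c3 c4 c5 c6.
move: (ad j 0) (ad j' 0) (ad j (k-1)) (ad j' (k-1)) (ad j b3) (ad j' b3) => d1 d2 d3 d4 d5 d6.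
move=> X1 Y1 X2 Y2 X3 Y3 E2 E3 q q' hq hq'.
case: hq => [->|[->|->]]; case: hq' => [->|[->|->]]; clear -X1 Y1 X2 Y2 X3 Y3 E2 E3; lia.
Qed.

Lemma ML n m k (p1 p2 p3 : 'I_n * 'I_k) : n = m + m -> 2 <= m -> 3 <= k ->
  exists x y, x != y /\ goodP x y (fun q => q = p1 \/ q = p2 \/ q = p3).
Proof.
move=> hn hm hk.
set P := (fun q => q = p1 \/ q = p2 \/ q = p3).
have h0 : 0 < n by lia.
have vert0 : (forall q, P q -> 0 < nat_of_ord q.2) -> exists x y, x != y /\ goodP x y P.
  move=> H.
  have l0 : 0 < k by lia.
  have l1 : 1 < k by lia.
  exists (Ordinal h0, Ordinal l0), (Ordinal h0, Ordinal l1); split.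
    apply/eqP => /(congr1 (fun p => nat_of_ord p.2)) /=; lia.
  move=> q q' hq hq'; have := H q hq; have := H q' hq'; rewrite /DD /ad /=; lia.
have vertk : (forall q, P q -> nat_of_ord q.2 < k - 1) -> exists x y, x != y /\ goodP x y P.
  move=> H.
  have l0 : k - 1 < k by lia.
  have l1 : k - 2 < k by lia.
  exists (Ordinal h0, Ordinal l0), (Ordinal h0, Ordinal l1); split.
    apply/eqP => /(congr1 (fun p => nat_of_ord p.2)) /=; lia.
  move=> q q' hq hq'; have := H q hq; have := H q' hq'; rewrite /DD /ad /=; lia.
have norm : forall q1 q2 q3, (forall q, P q <-> (q = q1 \/ q = q2 \/ q = q3)) ->
    nat_of_ord q1.2 = 0 -> nat_of_ord q2.2 = k - 1 -> exists x y, x != y /\ goodP x y P.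
  move=> q1 q2 q3 hP h1 h2.
  have [x [y [hxy hg]]] := NL q3 hn hm hk h1 h2.
  exists x, y; split => // q q' hq hq'; apply: hg; by apply/hP.
have lt1 : forall q : 'I_n * 'I_k, nat_of_ord q.2 < k by move=> q; apply: ltn_ord.
have [e1|e1] := eqVneq (nat_of_ord p1.2) 0.
  have [e2|e2] := eqVneq (nat_of_ord p2.2) (k - 1).
    by apply: (norm p1 p2 p3) => // q; rewrite /P; tauto.
  have [e3|e3] := eqVneq (nat_of_ord p3.2) (k - 1).
    by apply: (norm p1 p3 p2) => // q; rewrite /P; tauto.
  apply: vertk => q [->|[->|->]]; have := lt1 p1; have := lt1 p2; have := lt1 p3; lia.
have [e2|e2] := eqVneq (nat_of_ord p2.2) 0.
  have [e3|e3] := eqVneq (nat_of_ord p1.2) (k - 1).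
    by apply: (norm p2 p1 p3) => // q; rewrite /P; tauto.
  have [e4|e4] := eqVneq (nat_of_ord p3.2) (k - 1).
    by apply: (norm p2 p3 p1) => // q; rewrite /P; tauto.
  apply: vertk => q [->|[->|->]]; have := lt1 p1; have := lt1 p2; have := lt1 p3; lia.
have [e3|e3] := eqVneq (nat_of_ord p3.2) 0.
  have [e4|e4] := eqVneq (nat_of_ord p1.2) (k - 1).
    by apply: (norm p3 p1 p2) => // q; rewrite /P; tauto.
  have [e5|e5] := eqVneq (nat_of_ord p2.2) (k - 1).
    by apply: (norm p3 p2 p1) => // q; rewrite /P; tauto.
  apply: vertk => q [->|[->|->]]; have := lt1 p1; have := lt1 p2; have := lt1 p3; lia.
apply: vert0 => q [->|[->|->]]; lia.
Qed.

Lemma lower n k (Q : {set 'I_n * 'I_k}) : 4 <= n -> ~~ odd n -> 3 <= k ->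
  doubly_resolving (boxprod (@cycle_rel n) (@path_rel k)) Q -> 4 <= #|Q|.
Proof.
move=> hn hodd hk HQ.
rewrite leqNgt; apply/negP => hc.
set m := n./2.
have hnm : n = m + m by apply: half_even.
have hm : 2 <= m by lia.
have h0 : 0 < n by lia.
have l0 : 0 < k by lia.
pose x0 := (Ordinal h0, Ordinal l0) : 'I_n * 'I_k.
set s := enum Q.
have hs : size s <= 3 by rewrite /s -cardE; lia.
have hmem : forall q, q \in Q -> q = nth x0 s 0 \/ q = nth x0 s 1 \/ q = nth x0 s 2.
  move=> q hq.
  have hqs : q \in s by rewrite /s mem_enum.
  have hi : index q s < size s by rewrite index_mem.
  have := nth_index x0 hqs.
  case: (index q s) hi => [|[|[|t]]] hi <-; [left | right; left | right; right | lia]; done.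
have [x [y [hxy hg]]] := ML (nth x0 s 0) (nth x0 s 1) (nth x0 s 2) hnm hm hk.
apply: (HQ x y hxy).
exists ((DD x (nth x0 s 0))%:Z - (DD y (nth x0 s 0))%:Z)%R => q hq.
rewrite !distE; apply: zeq'.
have := hg q (nth x0 s 0) (hmem q hq) (or_introl erefl); lia.
Qed.

Theorem lemma3p2 (n k : nat) :
  4 <= n -> ~~ odd n -> 3 <= k ->
  psi_eq (boxprod (@cycle_rel n) (@path_rel k)) 4.
Proof.
move=> hn hodd hk; split; first exact: upper.
by move=> Q HQ; apply: lower.
Qed.
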